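(* There is an absolute constant $c>0$ such that for every integer $d \geq 4$ and every positive integer $k \leq d$, there exists a set $\mathcal{H}$ of hyperplanes in $\mathbb{R}^d$ with $$\operatorname{vcdim}\left(\Delta_k(\mathcal{H})\right) \geq c\, d\, k \log k,$$ i.e. $\operatorname{vcdim}(\Delta_k(\mathcal{H})) = \Omega(d \cdot k\log k)$.
   Context: For a set $\mathcal{H}$ of hyperplanes in $\mathbb{R}^d$ and an integer $1 \le k \le d$, define the set system on ground set $\mathcal{H}$ $$\Delta_k(\mathcal{H}) = \{ H \subseteq \mathcal{H} : \text{there is an open } k\text{-dimensional simplex } \Delta \text{ in } \mathbb{R}^d \text{ such that } H = \{h \in \mathcal{H} : h \cap \Delta \neq \emptyset\}\},$$ where an open $k$-dimensional simplex is the relative interior of the convex hull of $k+1$ affinely independent points of $\mathbb{R}^d$. For a set system $(X,\mathcal{R})$ and $Y \subseteq X$, $\mathcal{R}$ shatters $Y$ if $\{Y \cap R : R \in \mathcal{R}\}$ is the full power set of $Y$; $\operatorname{vcdim}(\mathcal{R})$ is the largest size of a subset of $X$ shattered by $\mathcal{R}$. Logarithms are base 2. *)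

(* Defs.v *)
From HB Require Import structures.
From mathcomp Require Import all_boot all_order all_algebra.
From mathcomp Require Import all_classical all_reals all_analysis.
From mathcomp Require Import Rstruct Rstruct_topology.
Set Implicit Arguments. Unset Strict Implicit. Unset Printing Implicit Defensive.
Import Order.TTheory GRing.Theory Num.Theory.
Import numFieldNormedType.Exports.
Local Open Scope classical_set_scope.
Local Open Scope ring_scope.

Notation R := Rdefinitions.R.
Notation pt d := 'rV[R]_d.

Definition is_hyperplane (d : nat) (h : set (pt d)) : Prop :=
  exists (a : pt d) (b : Rdefinitions.R), a != 0 /\
    h = [set x : pt d | \sum_(j < d) a 0 j * x 0 j = b].

Definition affine_hull (d : nat) (S : set (pt d)) : set (pt d) :=
  [set x | exists (n : nat) (q : 'I_n -> pt d) (l : 'I_n -> R),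
     (forall i, S (q i)) /\ \sum_(i < n) l i = 1 /\
     x = \sum_(i < n) l i *: q i].

Definition convex_hull (d : nat) (S : set (pt d)) : set (pt d) :=
  [set x | exists (n : nat) (q : 'I_n -> pt d) (l : 'I_n -> R),
     (forall i, S (q i)) /\ (forall i, 0 <= l i) /\ \sum_(i < n) l i = 1 /\
     x = \sum_(i < n) l i *: q i].

(* Relative interior: interior relative to the affine hull
   (norm on 'rV[R]_d is MathComp-Analysis' matrix norm; all norms are equivalent). *)
Definition rel_interior (d : nat) (C : set (pt d)) : set (pt d) :=
  [set x | C x /\ exists e : R, 0 < e /\
     forall y, affine_hull C y -> `|y - x| < e -> C y].

Definition aff_indep (d k : nat) (p : 'I_k.+1 -> pt d) : Prop :=
  forall l : 'I_k.+1 -> R, \sum_(i < k.+1) l i = 0 ->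
    \sum_(i < k.+1) l i *: p i = 0 -> forall i, l i = 0.

Definition open_simplex (d k : nat) (p : 'I_k.+1 -> pt d) : set (pt d) :=
  rel_interior (convex_hull (range p)).

Definition Delta (d k : nat) (H : set (set (pt d))) : set (set (set (pt d))) :=
  [set Hs | exists p : 'I_k.+1 -> pt d, aff_indep p /\
     Hs = [set h | H h /\ h `&` open_simplex p !=set0]].

Definition shatters (T : Type) (F : set (set T)) (Y : set T) : Prop :=
  forall Z, Z `<=` Y -> exists2 A, F A & Y `&` A = Z.

Definition vcdim_ge (T : Type) (X : set T) (F : set (set T)) (x : R) : Prop :=
  exists (m : nat) (f : 'I_m -> T), injective f /\ (forall i, X (f i)) /\
    shatters F (range f) /\ x <= m%:R.

Definition log2 (x : R) : R := ln x / ln 2.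

(* Main.v *)
Require Import Defs.
From HB Require Import structures.
From mathcomp Require Import all_boot all_order all_algebra.
From mathcomp Require Import all_classical all_reals all_analysis.
From mathcomp Require Import Rstruct Rstruct_topology.
From mathcomp.algebra_tactics Require Import ring lra.
From mathcomp Require Import zify.
Set Implicit Arguments. Unset Strict Implicit. Unset Printing Implicit Defensive.
Import Order.TTheory GRing.Theory Num.Theory.
Import numFieldNormedType.Exports.
Local Open Scope classical_set_scope.
Local Open Scope ring_scope.

Lemma entry_le_norm m n (v : 'M[R]_(m, n)) i j : `|v i j| <= `|v|.
Proof.
rewrite [leRHS]/Num.Def.normr /= mx_normrE; apply/bigmax_geP; right => /=; exists (i, j) => //.
Qed.

Lemma finmin (I : finType) (F : I -> R) : (forall i, 0 < F i) ->
  exists2 e, 0 < e & forall i, e <= F i.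
Proof.
move=> Fp; set S := \sum_i (F i)^-1.
have S0 : 0 <= S by apply: sumr_ge0 => i _; rewrite invr_ge0 ltW.
exists (1 + S)^-1; first by rewrite invr_gt0 ltr_wpDr.
move=> i; rewrite -[F i]invrK lef_pV2 ?posrE ?invr_gt0 ?ltr_wpDr //.
rewrite /S (bigD1 i) //= addrCA lerDl addr_ge0 //.
by apply: sumr_ge0 => j _; rewrite invr_ge0 ltW.
Qed.

Lemma dot_sum d (u : pt d) n (l : 'I_n -> R) (q : 'I_n -> pt d) :
  \sum_(t < d) u 0 t * (\sum_(i < n) l i *: q i) 0 t =
  \sum_(i < n) l i * \sum_(t < d) u 0 t * q i 0 t.
Proof.
under eq_bigr => t _ do rewrite summxE big_distrr /=.
rewrite exchange_big /=; apply: eq_bigr => i _; rewrite big_distrr /=.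
by apply: eq_bigr => t _; rewrite mxE mulrCA.
Qed.

Definition bary d k (p : 'I_k.+1 -> pt d) (x : pt d) :=
  exists mu : 'I_k.+1 -> R, \sum_i mu i = 1 /\ x = \sum_i mu i *: p i.

Lemma AH d k (p : 'I_k.+1 -> pt d) (S : set (pt d)) :
  S `<=` bary p -> affine_hull S `<=` bary p.
Proof.
move=> SB y [n [q [l [qS [l1 ->]]]]].
have /choice [mu Hmu] : forall i : 'I_n, exists mu : 'I_k.+1 -> R,
    \sum_j mu j = 1 /\ q i = \sum_j mu j *: p j by move=> i; exact: SB.
exists (fun j => \sum_i l i * mu i j); split.
  rewrite exchange_big /= -l1; apply: eq_bigr => i _.
  by rewrite -big_distrr /= (proj1 (Hmu i)) mulr1.
under [RHS]eq_bigr => j _ do rewrite scaler_suml.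
rewrite exchange_big /=; apply: eq_bigr => i _.
by rewrite (proj2 (Hmu i)) scaler_sumr; apply: eq_bigr => j _; rewrite scalerA.
Qed.

Lemma range_bary d k (p : 'I_k.+1 -> pt d) : range p `<=` bary p.
Proof.
move=> _ [i _ <-]; exists (fun j => (j == i)%:R); split.
  by rewrite (bigD1 i) //= eqxx big1 ?addr0 // => j /negbTE ->.
rewrite (bigD1 i) //= eqxx scale1r big1 ?addr0 // => j /negbTE ->.
by rewrite scale0r.
Qed.

Lemma conv_aff d (S : set (pt d)) : convex_hull S `<=` affine_hull S.
Proof. by move=> x [n [q [l [? [? [? ->]]]]]]; exists n, q, l. Qed.

Lemma aff_bary d k (p : 'I_k.+1 -> pt d) y :
  affine_hull (convex_hull (range p)) y -> bary p y.
Proof.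
apply: AH => z /conv_aff; apply: AH; exact: range_bary.
Qed.

Lemma RI d k (p : 'I_k.+1 -> pt d) (lam : 'I_k.+1 -> R) :
  aff_indep p -> (forall i, 0 < lam i) -> \sum_i lam i = 1 ->
  rel_interior (convex_hull (range p)) (\sum_i lam i *: p i).
Proof.
move=> ind lp l1.
set x := \sum_i lam i *: p i.
pose Pm : 'M[R]_(k.+1, d) := \matrix_(i, t) p i 0 t.
pose A : 'M[R]_(k.+1, d + 1) := row_mx Pm (const_mx 1).
have PmE : forall mu : 'I_k.+1 -> R, \row_i mu i *m Pm = \sum_i mu i *: p i.
  move=> mu; apply/rowP => t; rewrite !mxE summxE; apply: eq_bigr => i _.
  by rewrite !mxE.
have CE : forall mu : 'I_k.+1 -> R,
    \row_i mu i *m (const_mx 1 : 'M[R]_(k.+1,1)) = (\sum_i mu i)%:M.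
  move=> mu; apply/rowP => t; rewrite !mxE (ord1 t) eqxx mulr1n.
  by apply: eq_bigr => i _; rewrite !mxE mulr1.
have rf : row_free A.
  apply/inj_row_free => v; rewrite mul_mx_row => /eqP.
  rewrite row_mx_eq0 => /andP[/eqP h1 /eqP h2].
  have vE : v = \row_i v 0 i by apply/rowP => i; rewrite mxE.
  rewrite vE PmE in h1; rewrite vE CE in h2.
  apply/rowP => i; rewrite !mxE; apply: ind => //.
  by move/matrixP: h2 => /(_ 0 0); rewrite !mxE eqxx mulr1n.
have [B AB] := row_freeP rf.
have key : forall mu : 'I_k.+1 -> R, \sum_i mu i = 1 ->
    forall i, mu i = (row_mx (\sum_i mu i *: p i) 1 *m B) 0 i.
  move=> mu m1 i.
  have <- : \row_i mu i *m A = row_mx (\sum_i mu i *: p i) 1.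
    by rewrite mul_mx_row PmE CE m1.
  by rewrite -mulmxA AB mulmx1 mxE.
pose M := 1 + \sum_i \sum_t `|B t i|.
have M0 : 0 < M.
  by rewrite ltr_wpDr // sumr_ge0 // => i _; rewrite sumr_ge0.
have [del del0 dell] := finmin lp.
split; first by exists k.+1, p, lam; split => //; split => // i; exact: ltW.
exists (del / M); split; first by rewrite divr_gt0.
move=> y /aff_bary [mu [m1 yE]] yx.
have bnd : forall i, `|mu i - lam i| <= `|y - x| * M.
  move=> i; rewrite (key mu m1 i) (key lam l1 i) -yE -/x.
  have -> : forall a b : 'rV[R]_(d + 1), (a *m B) 0 i - (b *m B) 0 i = ((a - b) *m B) 0 i.
    by move=> a b; rewrite mulmxBl !mxE.
  rewrite opp_row_mx add_row_mx subrr mxE.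
  apply: (le_trans (ler_norm_sum _ _ _)).
  apply: (@le_trans _ _ (\sum_t `|y - x| * `|B t i|)).
    apply: ler_sum => t _; rewrite normrM ler_wpM2r //.
    have -> : t = unsplit (fintype.split t) by rewrite splitK.
    case: (fintype.split t) => j /=; rewrite ?row_mxEl ?row_mxEr ?entry_le_norm //.
    by rewrite mxE normr0.
  rewrite -big_distrr /= ler_wpM2l //.
  rewrite /M (bigD1 i) //= addrCA lerDl addr_ge0 //.
  by apply: sumr_ge0 => j _; rewrite sumr_ge0.
exists k.+1, p, mu; split => //; split; last by split.
move=> i; have := bnd i.
have : `|y - x| * M < del.
  by rewrite -ltr_pdivlMr.
move=> h1 h2; have h3 := le_lt_trans h2 h1.
have := dell i; move: h3; rewrite ltr_norml => /andP[h4 _] h5.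
apply: ltW; lra.
Qed.

Definition dotv d (u x : pt d) : R := \sum_(t < d) u 0 t * x 0 t.
Definition hyp d (u : pt d) : set (pt d) := [set x | dotv u x = 1].

Lemma hit_lemma d k (p : 'I_k.+1 -> pt d) (u : pt d) : aff_indep p ->
  (forall i, dotv u (p i) != 1) -> (exists i, 1 < dotv u (p i)) ->
  (exists i, dotv u (p i) < 1) -> hyp u `&` open_simplex p !=set0.
Proof.
move=> ind ne1 [i1 h1] [i2 h2].
pose f i := dotv u (p i) - 1.
have fne : forall i, f i != 0 by move=> i; rewrite subr_eq0.
pose np : R := \sum_i ((0 < f i)%R)%:R.
pose nn : R := \sum_i ((f i < 0)%R)%:R.
have np0 : 0 < np.
  rewrite /np (bigD1 i1) //= (_ : 0 < f i1); last by rewrite /f subr_gt0.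
  have : 0 <= \sum_(i | i != i1) ((0 < f i)%R)%:R :> R by apply: sumr_ge0.
  move=> h; rewrite /=; lra.
have nn0 : 0 < nn.
  rewrite /nn (bigD1 i2) //= (_ : f i2 < 0); last by rewrite /f subr_lt0.
  have : 0 <= \sum_(i | i != i2) ((f i < 0)%R)%:R :> R by apply: sumr_ge0.
  move=> h; rewrite /=; lra.
pose w i := if 0 < f i then nn / f i else np / (- f i).
have fneg : forall i, ~~ (0 < f i) -> f i < 0.
  by move=> i; rewrite -leNgt le_eqVlt (negbTE (fne i)).
have wp : forall i, 0 < w i.
  move=> i; rewrite /w; case: ifP => h; first by rewrite divr_gt0.
  by rewrite divr_gt0 // oppr_gt0 fneg ?h.
have wf : forall i, w i * f i = ((0 < f i)%R)%:R * nn - ((f i < 0)%R)%:R * np.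
  move=> i; rewrite /w; case: ifP => h.
    by rewrite divfK // lt_gtF // mul1r mul0r subr0.
  have h' := fneg i (negbT h).
  rewrite h' mul0r mul1r sub0r invrN mulrN mulNr divfK //.
pose W := \sum_i w i.
have W0 : 0 < W.
  rewrite /W (bigD1 ord0) //=.
  have : 0 <= \sum_(i | i != ord0) w i by apply: sumr_ge0 => i _; exact: ltW.
  have := wp ord0; lra.
pose lam i := w i / W.
have lamp : forall i, 0 < lam i by move=> i; rewrite divr_gt0.
have lam1 : \sum_i lam i = 1 by rewrite /lam -mulr_suml divff // gt_eqF.
exists (\sum_i lam i *: p i); split; last exact: RI.
rewrite /hyp /= /dotv dot_sum.
have -> : \sum_i lam i * (\sum_(t < d) u 0 t * p i 0 t) = \sum_i lam i * f i + \sum_i lam i.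
  by rewrite -big_split /=; apply: eq_bigr => i _; rewrite /f /dotv; ring.
rewrite lam1 /lam.
have -> : \sum_i w i / W * f i = (\sum_i w i * f i) / W.
  by rewrite mulr_suml; apply: eq_bigr => i _; rewrite mulrAC.
under eq_bigr => i _ do rewrite wf.
rewrite sumrB -!mulr_suml -/np -/nn [nn * _]mulrC subrr mul0r add0r //.
Qed.

Lemma miss_lemma d k (p : 'I_k.+1 -> pt d) (u : pt d) :
  (forall i, dotv u (p i) < 1) -> ~ (hyp u `&` open_simplex p !=set0).
Proof.
move=> lt1 [x [hx [[n [q [l [qr [l0 [l1 xE]]]]]] _]]].
have [del del0 dell] := @finmin _ (fun i => 1 - dotv u (p i)) (fun i => (ltac:(rewrite subr_gt0; exact: lt1 i))).
have : dotv u x <= 1 - del.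
  rewrite xE /dotv dot_sum.
  apply: (@le_trans _ _ (\sum_i l i * (1 - del))).
    apply: ler_sum => i _; apply: ler_wpM2l => //.
    have [j _ <-] := qr i; have := dell j; rewrite /dotv /=; lra.
  by rewrite -mulr_suml l1 mul1r.
rewrite hx; lra.
Qed.

Definition ev d (t : nat) : pt d := \row_(j < d) ((j : nat) == t)%:R.

Lemma dotvD d (u a b : pt d) : dotv u (a + b) = dotv u a + dotv u b.
Proof. by rewrite /dotv -big_split; apply: eq_bigr => t _; rewrite mxE mulrDr. Qed.
Lemma dotvN d (u a : pt d) : dotv u (- a) = - dotv u a.
Proof. by rewrite /dotv -sumrN; apply: eq_bigr => t _; rewrite mxE mulrN. Qed.
Lemma dotv0 d (u : pt d) : dotv u 0 = 0.
Proof. by rewrite /dotv big1 // => t _; rewrite mxE mulr0. Qed.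
Lemma dotv_ev_ge0 d (u : pt d) t : (forall j, 0 <= u 0 j) -> 0 <= dotv u (ev d t).
Proof. by move=> h; rewrite /dotv sumr_ge0 // => j _; rewrite mxE mulr_ge0. Qed.
Lemma dotv_ev0 d (u : pt d) t : (forall j : 'I_d, (j : nat) = t -> u 0 j = 0) ->
  dotv u (ev d t) = 0.
Proof.
move=> h; rewrite /dotv big1 // => j _; rewrite mxE.
by case: eqP => [/h -> | _]; rewrite ?mul0r ?mulr0.
Qed.

Definition vtx d (ys : seq (pt d)) (i : nat) : pt d :=
  if (i < size ys)%N then nth 0 ys i + ev d (d - size ys + i)
  else - ev d (i - size ys).
Definition verts d k (ys : seq (pt d)) (i : 'I_k.+1) : pt d :=
  if (i : nat) is i'.+1 then vtx ys i' else 0.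

Lemma verts_lift d k (ys : seq (pt d)) (i : 'I_k) : verts ys (lift ord0 i) = vtx ys i.
Proof. by rewrite /verts lift0. Qed.
Lemma verts0 d k (ys : seq (pt d)) : @verts d k ys ord0 = 0.
Proof. by []. Qed.

Lemma verts_indep d k (ys : seq (pt d)) D :
  (k <= d)%N -> (D + size ys <= d)%N -> (size ys <= k)%N ->
  (forall i (t : 'I_d), (D <= t)%N -> (nth 0 ys i) 0 t = 0) ->
  aff_indep (@verts d k ys).
Proof.
move=> kd Ds sk yD l l0 lp.
set s := size ys.
have ss : s = size ys by [].
have E : forall c : 'I_d, \sum_(i < k) l (lift ord0 i) * vtx ys i 0 c = 0.
  move=> c; move/rowP: lp => /(_ c); rewrite summxE big_ord_recl /= !mxE mulr0 add0r.
  move=> h; rewrite -[RHS]h; apply: eq_bigr => i _; by rewrite verts_lift !mxE.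
have Hcut : forall i : 'I_k, (i < s)%N -> l (lift ord0 i) = 0.
  move=> i0 hi.
  have cd : (d - s + i0 < d)%N by lia.
  have := E (Ordinal cd); rewrite (bigD1 i0) //= big1 ?addr0.
    by rewrite /vtx -/s hi !mxE yD /= ?eqxx ?add0r ?mulr1 //; lia.
  move=> i ii0; rewrite /vtx -/s; case: ifP => iis; rewrite !mxE /=.
    rewrite yD /=; last lia.
    have -> : (d - s + i0 == d - s + i)%N = false.
      by apply/negbTE; move: ii0; apply: contra => /eqP h; apply/eqP/val_inj => /=; lia.
    by rewrite add0r mulr0.
  have -> : (d - s + i0 == i - s)%N = false.
    by apply/negbTE/eqP; have := ltn_ord i; lia.
  by rewrite /= mulr0n oppr0 mulr0.
have Hdum : forall i : 'I_k, (s <= i)%N -> l (lift ord0 i) = 0.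
  move=> i0 hi.
  have cd : (i0 - s < d)%N by have := ltn_ord i0; lia.
  have := E (Ordinal cd); rewrite (bigD1 i0) //= big1 ?addr0.
    rewrite /vtx -/s ltnNge hi /= !mxE /= eqxx mulrN1 => /eqP.
    by rewrite oppr_eq0 => /eqP.
  move=> i ii0; rewrite /vtx -/s; case: ifP => iis.
    by rewrite Hcut // mul0r.
  rewrite !mxE /=.
  have -> : (i0 - s == i - s)%N = false.
    apply/negbTE; move: ii0; apply: contra => /eqP h; apply/eqP/val_inj => /=.
    move/negbT: iis; rewrite -leqNgt => iis; lia.
  by rewrite oppr0 mulr0.
have Hall : forall i : 'I_k, l (lift ord0 i) = 0.
  by move=> i; case: (ltnP i s) => h; [exact: Hcut | exact: Hdum].
move=> i; case: (unliftP ord0 i) => [j -> | ->]; first exact: Hall.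
move: l0; rewrite big_ord_recl big1 ?addr0 // => j _; exact: Hall.
Qed.

Lemma FW d k (I : finType) (U : I -> pt d) (D : nat) :
  (k <= d)%N ->
  (forall n t, 0 <= U n 0 t) ->
  (forall n (t : 'I_d), (D <= t)%N -> U n 0 t = 0) ->
  (forall Zi : I -> Prop, exists ys : seq (pt d),
     [/\ (size ys <= k)%N, (D + size ys <= d)%N,
         (forall i (t : 'I_d), (D <= t)%N -> (nth 0 ys i) 0 t = 0),
         (forall i n, (i < size ys)%N -> dotv (U n) (nth 0 ys i) != 1) &
         (forall n, Zi n <-> exists2 i, (i < size ys)%N & 1 < dotv (U n) (nth 0 ys i))]) ->
  forall Zi : I -> Prop, exists p : 'I_k.+1 -> pt d, aff_indep p /\
     forall n, (hyp (U n) `&` open_simplex p !=set0 <-> Zi n).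
Proof.
move=> kd U0 UD spec Zi; have [ys [sk Ds yD yne yZ]] := spec Zi.
have ind := verts_indep kd Ds sk yD.
exists (@verts d k ys); split => //.
move=> n.
have dvl : forall i : 'I_k, dotv (U n) (verts ys (lift ord0 i)) =
   if (i < size ys)%N then dotv (U n) (nth 0 ys i)
   else - dotv (U n) (ev d (i - size ys)).
  move=> i; rewrite verts_lift /vtx; case: ifP => // _; last by rewrite dotvN.
  by rewrite dotvD dotv_ev0 ?addr0 // => j hj; apply: UD; lia.
have dv0 : dotv (U n) (@verts d k ys ord0) = 0 by rewrite verts0 dotv0.
split.
  move=> hit; apply/yZ.
  case: (pselect (exists2 i, (i < size ys)%N & 1 < dotv (U n) (nth 0 ys i))) => // hno.
  exfalso; apply: (miss_lemma _ hit) => i.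
  case: (unliftP ord0 i) => [j -> | ->]; last by rewrite dv0 ltr01.
  rewrite dvl; case: ifP => hj.
    have := yne j n hj => h.
    rewrite lt_neqAle h /= leNgt; apply/negP => h2; apply: hno; by exists j.
  have := dotv_ev_ge0 (j - size ys) (U0 n); lra.
move=> /yZ [i0 hi0 h1].
apply: hit_lemma => //.
- move=> i; case: (unliftP ord0 i) => [j -> | ->]; last by rewrite dv0 eq_sym oner_eq0.
  rewrite dvl; case: ifP => hj; first exact: yne.
  have := dotv_ev_ge0 (j - size ys) (U0 n) => h.
  by apply/negP => /eqP h2; lra.
- have ik : (i0 < k)%N by lia.
  by exists (lift ord0 (Ordinal ik)); rewrite dvl /= hi0.
- by exists ord0; rewrite dv0 ltr01.
Qed.

Lemma VC d k (I : finType) (U : I -> pt d) (x : R) :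
  (forall n, U n != 0) ->
  (forall Zi : I -> Prop, exists p : 'I_k.+1 -> pt d, aff_indep p /\
     forall n, (hyp (U n) `&` open_simplex p !=set0 <-> Zi n)) ->
  x <= #|I|%:R ->
  (forall h, range (fun n => hyp (U n)) h -> is_hyperplane h) /\
  vcdim_ge (range (fun n => hyp (U n))) (Delta k (range (fun n => hyp (U n)))) x.
Proof.
move=> Un0 sh xle; split.
  by move=> _ [n _ <-]; exists (U n), 1; split.
set H := range (fun n => hyp (U n)).
exists #|I|, (fun i => hyp (U (enum_val i))); split; [|split; [|split]] => //.
- move=> i j eqij.
  have [p [_ hp]] := sh (fun n => n = enum_val i).
  have : hyp (U (enum_val j)) `&` open_simplex p !=set0.
    by rewrite -eqij; apply/hp.
  by move/hp => ej; apply: enum_val_inj; rewrite ej.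
- by move=> i; exists (enum_val i).
- move=> Z ZY.
  have [p [ip hp]] := sh (fun n => Z (hyp (U n))).
  exists [set h | H h /\ h `&` open_simplex p !=set0]; first by exists p.
  apply/seteqP; split.
    by move=> _ [[i _ <-] [_ hh]]; exact/hp.
  move=> h Zh; have [i _ hi] := ZY h Zh; split; first by exists i.
  rewrite -hi; split; first by exists (enum_val i).
  by apply/hp; rewrite hi.
Qed.

Section Constr.
Variables (d r L m : nat).

Definition Uv (gj : 'I_m * 'I_L) : pt d :=
  \row_(t < d) (if (t <= 2 * r)%N then ((gj.1 : nat)%:R : R) ^+ t
                else ((t : nat) == 2 * r + 1 + gj.2)%N%:R).

Definition Qp (ch : seq 'I_m) : {poly R} :=
  \prod_(a <- ch ++ ch) ('X - ((a : nat)%:R)%:P).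

Definition yv (P : {set 'I_L}) (ch : seq 'I_m) : pt d := \row_(t < d)
  (if (t : nat) == 0%N then 3%:R / 2%:R - (Qp ch)`_0
   else if (t <= 2 * r)%N then - (Qp ch)`_t
   else if (2 * r + 1 <= t < 2 * r + 1 + L)%N then
     (if [exists j in P, (j : nat) == t - (2 * r + 1)]%N then 0 else -1)
   else 0).

Lemma Qp_eval ch (x : R) : (Qp ch).[x] = \prod_(a <- ch ++ ch) (x - (a : nat)%:R).
Proof. by rewrite /Qp horner_prod; apply: eq_bigr => a _; exact: hornerXsubC. Qed.

Lemma Qp_size ch : size (Qp ch) = (2 * size ch).+1.
Proof. by rewrite /Qp size_prod_XsubC size_cat; lia. Qed.

Lemma Qp_in (g : 'I_m) ch : g \in ch -> (Qp ch).[(g : nat)%:R] = 0.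
Proof.
by move=> gc; rewrite Qp_eval (big_rem g) ?mem_cat ?gc //= subrr mul0r.
Qed.

Lemma natdist (K : numDomainType) (x y : nat) : x != y -> 1 <= `|x%:R - y%:R : K|.
Proof.
case: (ltngtP x y) => h // _.
  by rewrite distrC -natrB ?(ltnW h) // normr_nat ler1n subn_gt0.
by rewrite -natrB ?(ltnW h) // normr_nat ler1n subn_gt0.
Qed.

Lemma Qp_out (g : 'I_m) ch : g \notin ch -> 1 <= (Qp ch).[(g : nat)%:R].
Proof.
move=> gc; rewrite Qp_eval big_cat.
have h : forall s : seq 'I_m, g \notin s ->
    1 <= `|\prod_(a <- s) ((g : nat)%:R - (a : nat)%:R : R)|.
  elim => [|a s IH]; first by rewrite big_nil normr1.
  rewrite in_cons negb_or => /andP[ga gs].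
  rewrite big_cons normrM mulr_ege1 ?IH //; apply: natdist.
  by move: ga; apply: contra => /eqP h; apply/eqP/val_inj.
have := mulr_ege1 (h _ gc) (h _ gc); rewrite -normrM ger0_norm //.
by rewrite -expr2 sqr_ge0.
Qed.

Lemma exists_mem (P : {set 'I_L}) (j : 'I_L) :
  [exists j' in P, (j' : nat) == j] = (j \in P).
Proof.
apply/existsP/idP => [[j' /andP[jP /eqP e]]|jP].
  by have <- : j' = j by apply: val_inj.
by exists j; rewrite jP eqxx.
Qed.

Lemma DOT (g : 'I_m) (j : 'I_L) P ch : (2 * r + 1 + L <= d)%N -> (size ch <= r)%N ->
  dotv (Uv (g, j)) (yv P ch) =
  3%:R / 2%:R - (Qp ch).[(g : nat)%:R] + (if j \in P then 0 else -1).
Proof.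
move=> Dd sch.
pose t0 := (2 * r + 1 + j)%N.
have t0d : (t0 < d)%N by have := ltn_ord j; lia.
pose G (t : nat) : R := (g : nat)%:R ^+ t *
   (if t == 0%N then 3%:R / 2%:R - (Qp ch)`_0 else - (Qp ch)`_t).
pose beta : R := if j \in P then 0 else -1.
have pw : forall t : 'I_d, Uv (g, j) 0 t * yv P ch 0 t =
    (if (t < 2 * r + 1)%N then G t else 0) + ((t : nat) == t0)%:R * beta.
  move=> t; rewrite !mxE /=.
  case: (ltnP t (2 * r + 1)) => ht.
    rewrite (_ : (t <= 2 * r)%N = true); last by lia.
    rewrite (_ : ((t : nat) == t0) = false); last by apply/negbTE/eqP; lia.
    by rewrite mul0r addr0 /G; case: eqP.
  rewrite (_ : (t <= 2 * r)%N = false); last by lia.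
  rewrite (_ : ((t : nat) == 0%N) = false); last by apply/negbTE/eqP; lia.
  rewrite add0r.
  case: (eqVneq (t : nat) t0) => e.
    rewrite e (_ : (t0 < 2 * r + 1 + L)%N = true); last by have := ltn_ord j; lia.
    rewrite (_ : (t0 - (2 * r + 1))%N = j); last by lia.
    by rewrite exists_mem /= mulr1n mul1r.
  by rewrite /= mulr0n !mul0r.
have S2 : \sum_(t < d) ((t : nat) == t0)%:R * beta = beta.
  rewrite (bigD1 (Ordinal t0d)) //= eqxx mul1r big1 ?addr0 // => t tn.
  rewrite (_ : ((t : nat) == t0) = false) ?mul0r //.
  by apply/negbTE; move: tn; apply: contra => /eqP h; apply/eqP/val_inj.
rewrite /dotv (eq_bigr _ (fun t _ => pw t)) big_split S2.
rewrite -big_mkcond -(big_ord_widen _ G (_ : 2 * r + 1 <= d)%N); last by lia.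
rewrite (horner_coef_wide _ (_ : size (Qp ch) <= 2 * r + 1)%N); last first.
  by rewrite Qp_size; lia.
have GE : forall t : 'I_(2 * r + 1), G t =
    (if (t : nat) == 0%N then 3%:R / 2%:R else 0) - (Qp ch)`_t * (g : nat)%:R ^+ t.
  move=> t; rewrite /G; case: eqP => [->|_]; first by rewrite expr0 mulr1 mul1r.
  by rewrite sub0r mulrN mulrC.
rewrite (eq_bigr _ (fun t _ => GE t)) sumrB.
have h2 : (0 < 2 * r + 1)%N by lia.
have S3 : \sum_(t < 2 * r + 1) (if (t : nat) == 0%N then 3%:R / 2%:R else 0) = 3%:R / 2%:R :> R.
  rewrite (bigD1 (Ordinal h2)) //= big1 ?addr0 // => t tn.
  rewrite (_ : ((t : nat) == 0%N) = false) //.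
  by apply/negbTE; move: tn; apply: contra => /eqP h; apply/eqP/val_inj.
by rewrite S3.
Qed.

End Constr.

Definition chunks (r : nat) (T : Type) (s : seq T) : seq (seq T) :=
  mkseq (fun c => take r (drop (c * r) s)) ((size s + r.-1) %/ r).

Lemma chunks_size (r : nat) (T : eqType) (s : seq T) ch :
  ch \in chunks r s -> (size ch <= r)%N.
Proof. by move=> /mapP [c _ ->]; rewrite size_take_min geq_minl. Qed.

Lemma chunks_sub (r : nat) (T : eqType) (s : seq T) ch x :
  ch \in chunks r s -> x \in ch -> x \in s.
Proof. by move=> /mapP [c _ ->] /mem_take /mem_drop. Qed.

Lemma chunks_cover (r : nat) (T : eqType) (s : seq T) x :
  (0 < r)%N -> x \in s -> exists2 ch, ch \in chunks r s & x \in ch.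
Proof.
move=> r0 /(nthP x) [i hi <-].
have dv := divn_eq i r; have md := ltn_pmod i r0.
exists (take r (drop (i %/ r * r)%N s)).
  apply/mapP; exists (i %/ r)%N => //; rewrite mem_iota add0n.
  rewrite ltn_divLR //.
  have := divn_eq (size s + r.-1) r; have := ltn_pmod (size s + r.-1) r0.
  nia.
apply/(nthP x); exists (i %% r)%N.
  rewrite size_take_min size_drop; nia.
by rewrite nth_take // nth_drop -divn_eq.
Qed.

Lemma sum_div (I : finType) (f : I -> nat) r : (0 < r)%N ->
  (\sum_i (f i %/ r) <= (\sum_i f i) %/ r)%N.
Proof.
move=> r0; elim/big_rec2: _ => // i x y _ h.
rewrite divnD //; lia.
Qed.

Lemma ceil_div_le a r : (0 < r)%N -> ((a + r.-1) %/ r <= a %/ r + (a != 0%N))%N.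
Proof.
move=> r0; case: eqP => [->|_].
  by rewrite add0n divn_small ?addn0 //; lia.
rewrite divnD // (divn_small (_ : r.-1 < r)%N); last by lia.
by case: leqP; lia.
Qed.

Local Close Scope classical_set_scope.


Lemma count_bound L (m r : nat) (T : 'I_m -> {set 'I_L}) : (0 < r)%N ->
  (\sum_(P : {set 'I_L}) ((#|[set g | (T g == P) && (P != finset.set0)]| + r.-1) %/ r)
     <= m %/ r + (2 ^ L).-1)%N.
Proof.
move=> r0.
have step : forall P : {set 'I_L},
    ((#|[set g | (T g == P) && (P != finset.set0)]| + r.-1) %/ r <=
     #|[set g | (T g == P) && (P != finset.set0)]| %/ r + (P != finset.set0))%N.
  move=> P; apply: (leq_trans (ceil_div_le _ r0)); rewrite leq_add2l.
  case: (eqVneq P finset.set0) => [-> | hP]; last by rewrite leq_b1.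
  rewrite (_ : #|_| = 0%N) //; apply/eqP; rewrite cards_eq0; apply/eqP/setP => g.
  by rewrite !inE andbF.
apply: leq_trans; first by apply: leq_sum => P _; exact: step P.
rewrite big_split /=; apply: leq_add.
  apply: (leq_trans (sum_div _ r0)); apply: leq_div2r.
  have cardA : forall P : {set 'I_L}, #|[set g | (T g == P) && (P != finset.set0)]| =
      (\sum_g ((T g == P) && (P != finset.set0) : nat))%N.
    move=> P; rewrite -sum1dep_card big_mkcond /=; apply: eq_bigr => g _.
    by case: (_ && _).
  under eq_bigr => P _ do rewrite cardA.
  rewrite exchange_big /=.
  apply: (@leq_trans (\sum_(g < m) 1)%N).
    apply: leq_sum => g _.
    rewrite (bigD1 (T g)) //= big1 ?addn0; first by case: (_ && _).
    by move=> P hP; rewrite eq_sym (negbTE hP).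
  by rewrite big_const_ord iter_addn_0 mul1n.
have -> : (\sum_(P : {set 'I_L}) (P != finset.set0 : nat))%N = #|[set~ (finset.set0 : {set 'I_L})]|.
  rewrite -[RHS](_ : #|[set P : {set 'I_L} | P != finset.set0]| = _); last first.
    by apply: eq_card => P; rewrite !inE.
  rewrite -sum1dep_card [RHS]big_mkcond /=; apply: eq_bigr => P _.
  by case: (P != finset.set0).
rewrite cardsC1 -cardsT -powersetT card_powerset cardsT card_ord //.
Qed.

Lemma SPEC d r q L k : (0 < r)%N -> (q + (2 ^ L).-1 <= k)%N ->
  (2 * r + 1 + L + (q + (2 ^ L).-1) <= d)%N ->
  forall Zi : 'I_(r * q) * 'I_L -> Prop, exists ys : seq (pt d),
     [/\ (size ys <= k)%N, (2 * r + 1 + L + size ys <= d)%N,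
         (forall i (t : 'I_d), (2 * r + 1 + L <= t)%N -> (nth 0 ys i) 0 t = 0),
         (forall i (n : 'I_(r * q) * 'I_L), (i < size ys)%N -> dotv (Uv d r n) (nth 0 ys i) != 1) &
         (forall n, Zi n <-> exists2 i, (i < size ys)%N & 1 < dotv (Uv d r n) (nth 0 ys i))].
Proof.
move=> r0 hk hd Zi.
pose T (g : 'I_(r * q)) := [set j : 'I_L | `[< Zi (g, j) >]].
pose AP (P : {set 'I_L}) := enum [set g | (T g == P) && (P != finset.set0)].
pose specs := flatten [seq [seq (P, ch) | ch <- chunks r (AP P)] | P <- index_enum {set 'I_L}].
pose ys := [seq yv d r sp.1 sp.2 | sp <- specs].
have Dd : (2 * r + 1 + L <= d)%N by lia.
have sz : (size ys <= q + (2 ^ L).-1)%N.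
  rewrite size_map size_flatten /shape -map_comp sumnE big_map.
  under eq_bigr => P _ do rewrite /= size_map size_mkseq /AP -cardE.
  by apply: leq_trans (count_bound T r0) _; rewrite mulKn.
have mem_ys : forall y, y \in ys -> exists P ch, ch \in chunks r (AP P) /\ y = yv d r P ch.
  move=> y /mapP [[P ch] /flatten_mapP [P' _ /mapP [ch' chin [-> ->]]] ->].
  by exists P', ch'.
have val : forall g j P ch, ch \in chunks r (AP P) ->
    (dotv (Uv d r (g, j)) (yv d r P ch) != 1) /\
    (1 < dotv (Uv d r (g, j)) (yv d r P ch) -> (g \in ch) && (j \in P)).
  move=> g j P ch chin; rewrite DOT //; last exact: chunks_size chin.
  case: (boolP (g \in ch)) => gc.
    rewrite Qp_in //; case: (j \in P) => /=; split => //; try (apply/eqP; lra).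
    by move=> h; lra.
  have := Qp_out gc; set Q := (Qp ch).[_] => hQ.
  by case: (j \in P); split => //; try (apply/eqP; lra); move=> h; lra.
exists ys; split.
- by lia.
- by lia.
- move=> i t ht; case: (ltnP i (size ys)) => hi; last by rewrite nth_default // mxE.
  have /mem_ys [P [ch [_ ->]]] := mem_nth 0 hi.
  rewrite mxE (_ : ((t : nat) == 0%N) = false); last by apply/negbTE/eqP; lia.
  rewrite (_ : (t <= 2 * r)%N = false); last by lia.
  by rewrite (_ : (2 * r + 1 <= t < 2 * r + 1 + L)%N = false) //; lia.
- move=> i [g j] hi; have /mem_ys [P [ch [chin ->]]] := mem_nth 0 hi.
  exact: (val g j P ch chin).1.
- move=> [g j]; split.
    move=> z.
    have jT : j \in T g by rewrite inE; apply/asboolP.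
    have gA : g \in AP (T g).
      by rewrite mem_enum inE eqxx /=; apply/set0Pn; exists j.
    have [ch chin gch] := chunks_cover r0 gA.
    have yin : yv d r (T g) ch \in ys.
      apply/mapP; exists (T g, ch) => //; apply/flatten_mapP; exists (T g).
        by rewrite mem_index_enum.
      exact: map_f.
    have [i hi e] := nthP 0 yin.
    exists i => //; rewrite e DOT //; last exact: chunks_size chin.
    rewrite Qp_in // jT; lra.
  move=> [i hi h1]; have /mem_ys [P [ch [chin e]]] := mem_nth 0 hi.
  rewrite e in h1.
  have /andP [gch jP] := (val g j P ch chin).2 h1.
  have := chunks_sub chin gch; rewrite mem_enum inE => /andP [/eqP TP _].
  by move: jP; rewrite -TP inE => /asboolP.
Qed.

Local Open Scope classical_set_scope.

Lemma ln2_gt0 : 0 < ln (2 : R).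
Proof. by apply: ln_gt0; rewrite ltr1n. Qed.

Lemma log2_lt (k n : nat) : (0 < k)%N -> (k < 2 ^ n)%N -> log2 k%:R < n%:R.
Proof.
move=> k0 kn; rewrite /log2 ltr_pdivrMr ?ln2_gt0 //.
have : ln (k%:R : R) < ln ((2 : R) ^+ n).
  rewrite ltr_ln ?posrE ?ltr0n ?exprn_gt0 //; by rewrite -natrX ltr_nat.
rewrite lnXn // => h; rewrite mulr_natl; exact: h.
Qed.

Lemma log2_ge0 (k : nat) : (0 < k)%N -> 0 <= log2 k%:R.
Proof.
move=> k0; rewrite /log2 divr_ge0 ?ln_ge0 ?ler1n //; exact: ltW ln2_gt0.
Qed.

Lemma log2_1 : log2 1%:R = 0.
Proof. by rewrite /log2 ln1 mul0r. Qed.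

Lemma prod_bound (a b e A B E c : R) : 0 <= a -> 0 <= b -> 0 <= e ->
  a <= A -> b <= B -> e <= E -> 0 <= c -> c * a * b * e <= c * A * B * E.
Proof.
move=> a0 b0 e0 aA bB eE c0; rewrite -!mulrA ler_wpM2l //.
apply: ler_pM => //; first by rewrite mulr_ge0.
by apply: ler_pM.
Qed.

Lemma TRIV d k (x : R) : (2 <= d)%N -> (1 <= k <= d)%N -> x <= 1 ->
  exists Hs : set (set 'rV[R]_d),
    (forall h, Hs h -> is_hyperplane h) /\ vcdim_ge Hs (Delta k Hs) x.
Proof.
move=> d2 /andP[k1 kd] x1.
have d0 : (0 < d)%N by lia.
pose U := fun _ : 'I_1 => ev d 0.
have evE : forall t : 'I_d, ev d 0 0 t = ((t : nat) == 0%N)%:R by move=> t; rewrite mxE.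
have dot2 : dotv (ev d 0) (2%:R *: ev d 0) = 2%:R.
  rewrite /dotv (bigD1 (Ordinal d0)) //= big1 ?addr0.
    by rewrite !mxE /= ?mulr1n ?mul1r ?mulr1.
  move=> t tn; rewrite !mxE (_ : ((t : nat) == 0%N) = false) ?mul0r //.
  by apply/negbTE; move: tn; apply: contra => /eqP h; apply/eqP/val_inj.
have [] := @VC d k ('I_1) U x.
- move=> n; apply/eqP => /matrixP /(_ 0 (Ordinal d0)); rewrite !mxE /=.
  by move/eqP; rewrite oner_eq0.
- apply: (@FW d k _ U 1%N) => //.
  + by move=> n t; rewrite /U mxE ler0n.
  + move=> n t t1; rewrite /U mxE (_ : ((t : nat) == 0%N) = false) //.
    by apply/negbTE/eqP; lia.
  + move=> Zi; case: (pselect (Zi ord0)) => z.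
      exists [:: 2%:R *: ev d 0]; split => //=; try lia.
      * move=> i t t1; case: i => [|i] /=; last by rewrite nth_nil mxE.
        rewrite !mxE (_ : ((t : nat) == 0%N) = false) ?mulr0 //.
        by apply/negbTE/eqP; lia.
      * move=> i n; case: i => [|i] //= _; rewrite /U dot2.
        by apply/eqP; lra.
      * move=> n; rewrite (ord1 n); split => // _; exists 0%N => //.
        by rewrite /U dot2 ltr1n.
    exists [::]; split => //=; try lia.
    * by move=> i t _; rewrite nth_nil mxE.
    * by move=> n; rewrite (ord1 n); split => // [[i]].
- by rewrite card_ord.
by move=> h1 h2; exists (range (fun n => hyp (U n))).
Qed.

Lemma MAIN d k r q L (x : R) : (k <= d)%N -> (0 < r)%N -> (q + (2 ^ L).-1 <= k)%N ->
  (2 * r + 1 + L + (q + (2 ^ L).-1) <= d)%N -> x <= (r * q * L)%N%:R ->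
  exists Hs : set (set 'rV[R]_d),
    (forall h, Hs h -> is_hyperplane h) /\ vcdim_ge Hs (Delta k Hs) x.
Proof.
move=> kd r0 hk hd xle.
have d0 : (0 < d)%N by lia.
have [] := @VC d k ('I_(r * q) * 'I_L)%type (@Uv d r L (r * q)%N) x.
- move=> [g j]; apply/eqP => /matrixP /(_ 0 (Ordinal d0)); rewrite !mxE /=.
  by rewrite expr0 => /eqP; rewrite oner_eq0.
- apply: (@FW d k _ (@Uv d r L (r * q)%N) (2 * r + 1 + L)) => //.
  + move=> n t; rewrite mxE; case: ifP => _; last exact: ler0n.
    by apply: exprn_ge0; exact: ler0n.
  + move=> [g j] t ht; rewrite mxE /= (_ : (t <= 2 * r)%N = false); last by lia.
    rewrite (_ : ((t : nat) == 2 * r + 1 + j)%N = false) //.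
    by apply/negbTE/eqP; have := ltn_ord j; lia.
  + exact: SPEC.
- by rewrite card_prod !card_ord.
by move=> h1 h2; eexists; split; [exact: h1 | exact: h2].
Qed.

Theorem theorem3 : exists c : R, 0 < c /\
  forall d k : nat, (4 <= d)%N -> (1 <= k <= d)%N ->
  exists H : set (set 'rV[R]_d),
    (forall h, H h -> is_hyperplane h) /\
    vcdim_ge H (Delta k H) (c * d%:R * k%:R * log2 k%:R).
Proof.
exists (32768%:R)^-1; split; first by rewrite invr_gt0 ltr0n.
move=> d k d4 /andP[k1 kd].
set c := (32768%:R)^-1 : R.
have c0 : 0 <= c by rewrite invr_ge0 ler0n.
case: (ltnP d 16) => hd16; [|case: (ltnP k 2) => hk2].
- apply: TRIV => //; [lia | by rewrite k1 kd |].
  have k16 : (k < 2 ^ 4)%N by rewrite (_ : 2 ^ 4 = 16)%N //; lia.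
  have lg := ltW (log2_lt k1 k16).
  have b1 : (d%:R : R) <= 15%:R by rewrite ler_nat; lia.
  have b2 : (k%:R : R) <= 15%:R by rewrite ler_nat; lia.
  apply: le_trans (prod_bound (ler0n _ _) (ler0n _ _) (log2_ge0 k1) b1 b2 lg c0) _.
  have -> : c * 15%:R * 15%:R * 4%:R = 900%:R * c by ring.
  by rewrite /c ler_pdivrMr ?ltr0n // mul1r ler_nat.
- apply: TRIV => //; [lia | by rewrite k1 kd |].
  by rewrite (_ : k = 1%N); [rewrite log2_1 mulr0 ler01 | lia].
set q := maxn 1 (k %/ 4).
set L := maxn 1 (trunc_log 2 q).
set r := (d %/ 8)%N.
have [r0 [hk [hd [dr [kq [kL L1]]]]]] : (0 < r)%N /\ (q + (2 ^ L).-1 <= k)%N /\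
    (2 * r + 1 + L + (q + (2 ^ L).-1) <= d)%N /\ (d <= 16 * r)%N /\
    (k <= 8 * q)%N /\ (k < 2 ^ (L + 3))%N /\ (1 <= L)%N.
  have e3 : (2 ^ (L + 3) = 8 * 2 ^ L)%N by rewrite expnD mulnC.
  have e1 : (L < 2 ^ L)%N := ltn_expl L (isT : (1 < 2)%N).
  rewrite e3.
  case: (ltnP k 8) => hk8.
    have q1 : q = 1%N by rewrite /q; lia.
    have L1 : L = 1%N by rewrite /L q1 trunc_log1.
    have p2 : (2 ^ L = 2)%N by rewrite L1.
    rewrite p2; split; [lia|split; [lia|split; [lia|split; [lia|split; [lia|split; lia]]]]].
  have q4 : (q = k %/ 4)%N by rewrite /q; lia.
  have q2 : (1 < q)%N by lia.
  have tl1 : (0 < trunc_log 2 q)%N by rewrite trunc_log_gt0 /=; lia.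
  have LE : L = trunc_log 2 q by rewrite /L; lia.
  have hP : (2 ^ L <= q)%N by rewrite LE; apply: trunc_logP; lia.
  have hQ : (q < 2 * 2 ^ L)%N by rewrite LE -expnS; apply: trunc_log_ltn.
  split; [lia|split; [lia|split; [lia|split; [lia|split; [lia|split; lia]]]]].
apply: (@MAIN d k r q L) => //.
have b1 : (d%:R : R) <= 16%:R * r%:R by rewrite -natrM ler_nat.
have b2 : (k%:R : R) <= 8%:R * q%:R by rewrite -natrM ler_nat.
have b3 : log2 k%:R <= 4%:R * L%:R.
  apply: (le_trans (ltW (log2_lt k1 kL))).
  by rewrite -natrM ler_nat; lia.
apply: le_trans (prod_bound (ler0n _ _) (ler0n _ _) (log2_ge0 k1) b1 b2 b3 c0) _.
rewrite !natrM.
have -> : c * (16%:R * r%:R) * (8%:R * q%:R) * (4%:R * L%:R) =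
   (512%:R * c) * (r%:R * q%:R * L%:R) by ring.
apply: ler_piMl; first by rewrite !mulr_ge0 // ler0n.
by rewrite /c ler_pdivrMr ?ltr0n // mul1r ler_nat.
Qed.
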